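(* Assume $\alpha\le\beta+1$ and set $\lambda=\lfloor(\beta+1)/\alpha\rfloor$. Let $\mathcal{S}_0\subseteq\mathcal{S}$ be nonempty with maximum $\overline{s}$ and minimum $\underline{s}$, let $l=\lfloor(\beta+\underline{s}-\overline{s})/\alpha\rfloor$, and let $n\ge l$. Then there exists a set $\mathcal{V}^n(\mathcal{S}_0)\subseteq\mathbb{Z}^n$ of request sequences such that $$\log_2\big|\mathcal{V}^n(\mathcal{S}_0)\big|\le \left\lceil \frac{n-l}{\lambda}\right\rceil,$$ and such that for every input pair $(s_0,\mathbf{x})\in\mathcal{S}_0\times\mathcal{X}^n$ we have $\mathcal{Y}^n(s_0,\mathbf{x})\cap\mathcal{V}^n(\mathcal{S}_0)\neq\emptyset$ (feasible sets taken with output alphabet $\mathbb{Z}$).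
   Context: Fix integers $\alpha\ge 1$ (maximal consumption per step) and $\beta\ge 0$ (battery capacity). Let $\mathcal{X}=\{0,1,\dots,\alpha\}$ and $\mathcal{S}=\{0,1,\dots,\beta\}$. For an initial battery state $s_0\in\mathcal{S}$, a consumption sequence $\mathbf{x}=(x_0,\dots,x_{n-1})\in\mathcal{X}^n$ and a request sequence $\mathbf{y}=(y_0,\dots,y_{n-1})\in\mathbb{Z}^n$, the battery states are $s_i=s_0+\sum_{k=0}^{i-1}y_k-\sum_{k=0}^{i-1}x_k$ for $i=0,1,\dots,n$. For an output alphabet $\mathcal{Y}\subseteq\mathbb{Z}$, the set of feasible requests is $\mathcal{Y}^n(s_0,\mathbf{x})=\{\mathbf{y}\in\mathcal{Y}^n: s_i\in\{0,\dots,\beta\}\text{ for all } i=0,\dots,n\}$. *)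

(* Defs.v *)
From HB Require Import structures.
From mathcomp Require Import all_boot all_order all_algebra.
Set Implicit Arguments. Unset Strict Implicit. Unset Printing Implicit Defensive.
Import Order.TTheory GRing.Theory Num.Theory.

Definition ceil_div (a b : nat) : nat := (a + b.-1) %/ b.

Definition battery_state (s0 : nat) (x : seq nat) (y : seq int) (i : nat) : int :=
  (s0%:Z + \sum_(k < i) y`_k - \sum_(k < i) (nth 0%N x k)%:Z)%R.

(* y belongs to Y^n(s0, x) with output alphabet Z: all states s_0..s_n lie in {0..beta} *)
Definition feasible (beta n s0 : nat) (x : n.-tuple nat) (y : n.-tuple int) : Prop :=
  forall i, (i <= n)%N -> (0 <= battery_state s0 x y i <= beta%:Z)%R.

(* Main.v *)
Require Import Defs.
From HB Require Import structures.
From mathcomp Require Import all_boot all_order all_algebra.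
From mathcomp Require Import zify ring.
Import GRing.Theory Num.Theory.
Local Notation "n %:Z" := (Posz n) (only parsing).

Definition Bst (s0 : nat) (X : nat -> nat) (Y : nat -> int) (i : nat) : int :=
  (s0%:Z + \sum_(k < i) Y k - \sum_(k < i) (X k)%:Z)%R.

Lemma BstS s0 X Y i : Bst s0 X Y i.+1 = (Bst s0 X Y i + Y i - (X i)%:Z)%R.
Proof. rewrite /Bst !big_ord_recr /=. ring. Qed.

Lemma Bst0 s0 X Y : Bst s0 X Y 0 = s0%:Z.
Proof. by rewrite /Bst !big_ord0 subr0 addr0. Qed.

Lemma Bst_eq s0 X Y Y' i : (forall k, k < i -> Y k = Y' k) ->
  Bst s0 X Y i = Bst s0 X Y' i.
Proof.
move=> H; rewrite /Bst; congr (_ + _ - _)%R; apply: eq_bigr => k _; exact: H.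
Qed.

Lemma greedy s0 X (beta alpha lam a : nat) (Y : nat -> int) :
  (forall k, X k <= alpha) -> lam * alpha <= beta.+1 ->
  (0 <= Bst s0 X Y a <= beta%:Z)%R ->
  exists c : bool, forall Y', (forall k, k < a -> Y' k = Y k) ->
   (forall k, a <= k < a + lam -> Y' k = if c then alpha%:Z else 0%R) ->
   forall d, d <= lam -> (0 <= Bst s0 X Y' (a + d) <= beta%:Z)%R.
Proof.
move=> HX Hlam Ht.
set t := Bst s0 X Y a in Ht.
pose Dn d := \sum_(k < d) X (a + k).
have DnS d : Dn d.+1 = Dn d + X (a + d) by rewrite /Dn big_ord_recr.
have Dmono : forall e d, d <= e -> Dn d <= Dn e /\ Dn e <= Dn d + (e - d) * alpha.
  elim=> [|e IH] d Hde.
    have -> : d = 0 by lia.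
    by rewrite /Dn big_ord0; lia.
  case: (ltnP d e.+1) => Hd.
    have [H1 H2] := IH d (ltnSE Hd).
    rewrite DnS; have := HX (a + e).
    have -> : e.+1 - d = (e - d).+1 by lia.
    rewrite mulSn; lia.
  have -> : d = e.+1 by lia.
  rewrite subnn mul0n; lia.
exists (t < (Dn lam)%:Z)%R => Y' HY1 HY2.
have closed : forall d, d <= lam ->
   Bst s0 X Y' (a + d) = (t + (d * (if (t < (Dn lam)%:Z)%R then alpha else 0))%:Z
                          - (Dn d)%:Z)%R.
  elim=> [|d IH] Hd.
    rewrite addn0 mul0n /Dn big_ord0 subr0 addr0 /t.
    apply: Bst_eq => k Hk; exact: HY1.
  rewrite addnS BstS IH; last by lia.
  rewrite HY2; last by lia.
  rewrite DnS mulSn; case: ifP => _; lia.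
move=> d Hd; rewrite closed //.
have [H1 H2] := Dmono lam d Hd.
have Hm : (lam - d) * alpha + d * alpha = lam * alpha.
  by rewrite -mulnDl subnK.
case: ifP => Hc; last first.
  rewrite muln0.
  move: Hc => /negbT; rewrite -Order.TotalTheory.leNgt => Hc. lia.
have Hl2 : lam * alpha <= beta.+1 by [].
have [_ H0] := Dmono d 0 (leq0n _).
rewrite subn0 /Dn big_ord0 add0n -/(Dn d) in H0.
move: Hm H2 Hl2 H0.
generalize (d * alpha) ((lam - d) * alpha) (lam * alpha) => u v w.
lia.
Qed.

Definition entry (alpha beta smax l lam : nat) (f : nat -> bool) (k : nat) : int :=
  if k < l then (if k == 0 then (beta%:Z - smax%:Z)%R else 0%R)
  else (if f ((k - l) %/ lam) then alpha%:Z else 0%R).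

Lemma sumZ (X : nat -> nat) i : (\sum_(k < i) (X k)%:Z)%R = (\sum_(k < i) X k)%:Z.
Proof.
elim: i => [|i IH]; first by rewrite !big_ord0.
by rewrite !big_ord_recr /= IH PoszD.
Qed.

Lemma sum_le (X : nat -> nat) alpha i : (forall k, X k <= alpha) ->
  \sum_(k < i) X k <= i * alpha.
Proof.
move=> HX; elim: i => [|i IH]; first by rewrite big_ord0.
rewrite big_ord_recr /= mulSn addnC; exact: leq_add.
Qed.

Lemma main (alpha beta smin smax s0 : nat) (X : nat -> nat) :
  0 < alpha -> alpha <= beta.+1 -> smax <= beta -> smin <= s0 <= smax ->
  (forall k, X k <= alpha) ->
  let lam := (beta.+1 %/ alpha) in
  let l := ((beta + smin - smax) %/ alpha) in
  forall q, exists f, forall j, j <= l + q * lam ->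
    (0 <= Bst s0 X (entry alpha beta smax l lam f) j <= beta%:Z)%R.
Proof.
move=> Ha Hab Hsm Hs HX lam l.
have lam_pos : 0 < lam by rewrite divn_gt0.
have lamA : lam * alpha <= beta.+1 by apply: leq_trunc_div.
have lA : l * alpha <= beta + smin - smax by apply: leq_trunc_div.
elim=> [|q [f IH]].
  exists (fun _ => false) => j; rewrite mul0n addn0 => Hj.
  case: j Hj => [|j] Hj; first by rewrite Bst0; lia.
  rewrite /Bst big_ord_recl /= sumZ.
  have -> : (\sum_(i < j) entry alpha beta smax l lam (fun=> false) (bump 0 i) = 0)%R.
    apply: big1 => i _; rewrite /entry /bump /=.
    have -> : i.+1 < l by have := ltn_ord i; lia.
    done.
  rewrite /entry ifT; last by lia.
  have := @sum_le X alpha j.+1 HX.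
  have : j.+1 * alpha <= l * alpha by apply: leq_mul.
  move: lA; generalize (j.+1 * alpha) (l * alpha) (\sum_(k < j.+1) X k) => u v w.
  lia.
set a := l + q * lam.
have [c Hc] := @greedy s0 X beta alpha lam a (entry alpha beta smax l lam f) HX lamA (IH a (leqnn _)).
exists (fun i => if i == q then c else f i) => j Hj.
have agree : forall k, k < a -> entry alpha beta smax l lam (fun i => if i == q then c else f i) k
                                = entry alpha beta smax l lam f k.
  move=> k Hk; rewrite /entry; case: ifP => // Hkl.
  have : (k - l) %/ lam < q by rewrite ltn_divLR //; lia.
  by case: eqP => // ->; rewrite ltnn.
case: (leqP j a) => Hja.
  rewrite (@Bst_eq _ _ _ (entry alpha beta smax l lam f)); first exact: IH.
  move=> k Hk; apply: agree; lia.
have -> : j = a + (j - a) by lia.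
apply: Hc; last by rewrite mulSn in Hj; lia.
  exact: agree.
move=> k /andP [H1 H2]; rewrite /entry ifF; last by lia.
have -> : (k - l) %/ lam = q.
  have h1 : q <= (k - l) %/ lam by rewrite leq_divRL //; lia.
  have h2 : (k - l) %/ lam < q.+1 by rewrite ltn_divLR //; rewrite mulSn; lia.
  lia.
by rewrite eqxx.
Qed.

Theorem theorem1 (alpha beta : nat) (S0 : seq nat) (smin smax n : nat) :
  (0 < alpha)%N -> (alpha <= beta.+1)%N ->
  S0 != [::] -> (forall s, s \in S0 -> (s <= beta)%N) ->
  smin \in S0 -> smax \in S0 -> (forall s, s \in S0 -> (smin <= s <= smax)%N) ->
  let lam := (beta.+1 %/ alpha)%N in
  let l := ((beta + smin - smax) %/ alpha)%N in
  (l <= n)%N ->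
  exists V : seq (n.-tuple int),
    uniq V /\ (size V <= 2 ^ ceil_div (n - l) lam)%N /\
    (forall (s0 : nat) (x : n.-tuple nat),
        s0 \in S0 -> all (fun a => a <= alpha)%N x ->
        exists2 y, y \in V & feasible beta s0 x y).
Proof.
move=> Ha Hab _ Hbeta Hmin Hmax Hrange lam l Hln.
have lam_pos : 0 < lam by rewrite divn_gt0.
set m := ceil_div (n - l) lam.
pose code (f : nat -> bool) : n.-tuple int :=
  @Tuple n _ (mkseq (entry alpha beta smax l lam f) n) (introT eqP (size_mkseq _ _)).
exists (undup [seq code (fun i => nth false (val t) i) | t <- enum {: m.-tuple bool}]).
split; first exact: undup_uniq.
split.
  apply: leq_trans (size_undup _) _.
  by rewrite size_map -cardE card_tuple card_bool.
move=> s0 x Hs0 Hx.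
have HX : forall k, nth 0 x k <= alpha.
  move=> k; case: (ltnP k (size x)) => Hk; first exact: (all_nthP 0 Hx).
  by rewrite nth_default.
have [f Hf] := @main alpha beta smin smax s0 (nth 0 x) Ha Hab (Hbeta _ Hmax) (Hrange _ Hs0) HX n.
pose t : m.-tuple bool := @Tuple m _ (mkseq f m) (introT eqP (size_mkseq _ _)).
exists (code (fun i => nth false (val t) i)).
  by rewrite mem_undup; apply: map_f; rewrite mem_enum.
move=> i Hi.
have -> : battery_state s0 x (code (fun i => nth false (val t) i)) i
          = Bst s0 (nth 0 x) (entry alpha beta smax l lam f) i.
  rewrite /battery_state /Bst; congr (_ + _ - _)%R; apply: eq_bigr => k _.
  have Hk : k < n by have := ltn_ord k; lia.
  rewrite /= nth_mkseq // /entry; case: ifP => // Hkl.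
  rewrite nth_mkseq //.
  rewrite /m /ceil_div.
  rewrite leq_divRL //.
  have := leq_divM (k - l) lam.
  rewrite mulSn.
  generalize ((k - l) %/ lam * lam) => u.
  move/negbT: Hkl; rewrite -leqNgt => Hkl.
  lia.
apply: Hf.
have : n <= n * lam by rewrite leq_pmulr.
lia.
Qed.
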